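(* Let $J=[\alpha,\beta]$ and let $u:J\to\mathbb R$ be continuous such that $J$ is admissible for $u$. If $u(\alpha)\ge0$ and $u(\beta)\ge0$, then $u(x)\ge0$ for all $x\in J$. Analogously, if $u(\alpha)\le 0$ and $u(\beta)\le 0$, then $u(x)\le0$ for all $x\in J$.
   Context: Double crossover: a continuous $u$ has a double crossover on $[\gamma,\eta]$ if for some $\sigma\in\{\pm1\}$: $\sigma u(\gamma)\ge0$, $\sigma u((\gamma+\eta)/2)\le0$ and $\sigma u(\eta)\ge0$. Dyadic points of $J=[\alpha,\beta]$: $d_{n,k}=\alpha+(\beta-\alpha)k/2^n$, $k=0,\dots,2^n$, $n\in\mathbb N_0$; dyadic subintervals: $[d_{n,k},d_{n,k+1}]$, $k=0,\dots,2^n-1$, $n\in\mathbb N_0$. $J$ is admissible for $u$ if $u$ has no double crossover on any dyadic subinterval of $J$. *)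

(* Defs.v *)
From Stdlib Require Import Reals.
Open Scope R_scope.

Definition continuous_on_interval (u : R -> R) (a b : R) : Prop :=
  forall x, a <= x <= b ->
    forall eps, 0 < eps -> exists delta, 0 < delta /\
      forall y, a <= y <= b -> Rabs (y - x) < delta -> Rabs (u y - u x) < eps.

Definition double_crossover (u : R -> R) (g e : R) : Prop :=
  exists sigma : R, (sigma = 1 \/ sigma = -1) /\
    sigma * u g >= 0 /\ sigma * u ((g + e) / 2) <= 0 /\ sigma * u e >= 0.

Definition dyadic_point (a b : R) (n k : nat) : R :=
  a + (b - a) * INR k / 2 ^ n.

Definition admissible (u : R -> R) (a b : R) : Prop :=
  forall n k : nat, (k < 2 ^ n)%nat ->
    ~ double_crossover u (dyadic_point a b n k) (dyadic_point a b n (S k)).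

(* Main.v *)
Require Import Defs.
From Stdlib Require Import Reals Lra Lia ZArith.
Open Scope R_scope.

Lemma pow2_pos (n : nat) : 0 < 2 ^ n.
Proof. apply pow_lt; lra. Qed.

Lemma dp_even a b n m : dyadic_point a b (S n) (2 * m) = dyadic_point a b n m.
Proof.
  unfold dyadic_point. rewrite mult_INR. simpl (2 ^ S n).
  assert (H := pow2_pos n). simpl (INR 2). field. lra.
Qed.

Lemma dp_odd a b n m : dyadic_point a b (S n) (2 * m + 1) =
  (dyadic_point a b n m + dyadic_point a b n (S m)) / 2.
Proof.
  unfold dyadic_point. rewrite plus_INR, mult_INR, S_INR. simpl (2 ^ S n).
  assert (H := pow2_pos n). simpl (INR 2). simpl (INR 1). rewrite S_INR. field. lra.
Qed.

Lemma all_dyadic (u : R -> R) a b s : (s = 1 \/ s = -1) -> admissible u a b ->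
  s * u a >= 0 -> s * u b >= 0 ->
  forall n k, (k <= 2 ^ n)%nat -> s * u (dyadic_point a b n k) >= 0.
Proof.
  intros Hs Had Ha Hb n. induction n as [|n IH]; intros k Hk.
  - simpl in Hk. destruct k as [|[|k]]; try lia.
    + unfold dyadic_point. simpl. replace (a + (b - a) * 0 / 1) with a by field. exact Ha.
    + unfold dyadic_point. simpl. replace (a + (b - a) * 1 / 1) with b by field.
      exact Hb.
  - destruct (Nat.Even_or_Odd k) as [[m Hm]|[m Hm]]; subst k.
    + rewrite dp_even. apply IH. simpl in Hk. lia.
    + rewrite dp_odd. simpl in Hk.
      assert (Hm : (m < 2 ^ n)%nat) by lia.
      assert (H1 := IH m ltac:(lia)). assert (H2 := IH (S m) ltac:(lia)).
      destruct (Rle_dec (s * u ((dyadic_point a b n m + dyadic_point a b n (S m)) / 2)) 0)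
        as [Hle|Hgt].
      * exfalso. apply (Had n m Hm). exists s. repeat split; auto.
      * lra.
Qed.

Lemma INR_le_pow n : INR n <= 2 ^ n.
Proof.
  induction n. simpl; lra. rewrite S_INR. simpl.
  assert (1 <= 2 ^ n) by (apply pow_R1_Rle; lra). lra.
Qed.

Lemma dyadic_near a b x delta : a < b -> a <= x <= b -> 0 < delta ->
  exists n k, (k <= 2 ^ n)%nat /\ Rabs (dyadic_point a b n k - x) < delta.
Proof.
  intros Hab Hx Hd.
  destruct (archimed ((b - a) / delta)) as [Hup _].
  set (z0 := up ((b - a) / delta)) in *.
  assert (Hz0 : (0 <= z0)%Z).
  { apply le_IZR. assert (0 < (b-a)/delta) by (apply Rdiv_lt_0_compat; lra). lra. }
  exists (Z.to_nat z0).
  assert (Hpn : (b - a) / 2 ^ (Z.to_nat z0) < delta).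
  { assert (H := INR_le_pow (Z.to_nat z0)). rewrite INR_IZR_INZ, Z2Nat.id in H by lia.
    assert (Hp := pow2_pos (Z.to_nat z0)).
    apply (Rmult_lt_reg_r (2 ^ Z.to_nat z0)); auto.
    unfold Rdiv. rewrite Rmult_assoc, Rinv_l by lra. rewrite Rmult_1_r.
    apply (Rmult_lt_reg_r (/delta)). apply Rinv_0_lt_compat; lra.
    rewrite (Rmult_comm delta), Rmult_assoc, Rinv_r by lra.
    unfold Rdiv in Hup. lra. }
  set (n := Z.to_nat z0) in *.
  assert (Hp := pow2_pos n).
  set (t := (x - a) * 2 ^ n / (b - a)).
  assert (Ht0 : 0 <= t) by (unfold t; apply Rmult_le_pos; [apply Rmult_le_pos; lra|
     left; apply Rinv_0_lt_compat; lra]).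
  assert (Ht1 : t <= 2 ^ n).
  { unfold t. apply (Rmult_le_reg_r (b - a)); [lra|].
    unfold Rdiv. rewrite Rmult_assoc, Rinv_l, Rmult_1_r by lra.
    rewrite Rmult_comm. apply Rmult_le_compat_l; lra. }
  destruct (archimed t) as [Hu1 Hu2].
  set (z := (up t - 1)%Z).
  assert (Hz1 : IZR z <= t) by (unfold z; rewrite minus_IZR; simpl; lra).
  assert (Hz2 : t - 1 < IZR z) by (unfold z; rewrite minus_IZR; simpl; lra).
  assert (Hz : (0 <= z)%Z) by (apply le_IZR; apply Rnot_lt_le; intro Hc;
    assert (Hc' : (z < 0)%Z) by (apply lt_IZR; lra);
    assert (Hc'' : (z <= -1)%Z) by lia; apply IZR_le in Hc''; lra).
  exists (Z.to_nat z).
  assert (HK : INR (Z.to_nat z) = IZR z) by (rewrite INR_IZR_INZ, Z2Nat.id; auto).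
  split.
  - apply INR_le. rewrite HK, pow_INR. replace (INR 2) with 2 by (simpl; lra). lra.
  - unfold dyadic_point. rewrite HK.
    assert (Hx' : x = a + (b - a) * t / 2 ^ n) by (unfold t; field; lra).
    rewrite Hx'.
    replace (a + (b - a) * IZR z / 2 ^ n - (a + (b - a) * t / 2 ^ n))
      with (- ((b - a) / 2 ^ n * (t - IZR z))) by (field; lra).
    rewrite Rabs_Ropp, Rabs_right.
    + apply Rle_lt_trans with ((b - a) / 2 ^ n); auto.
      rewrite <- (Rmult_1_r ((b - a) / 2 ^ n)) at 2.
      apply Rmult_le_compat_l; [|lra].
      left; apply Rdiv_lt_0_compat; lra.
    + apply Rle_ge, Rmult_le_pos; [left; apply Rdiv_lt_0_compat|]; lra.
Qed.

Lemma dp_in a b n k : a < b -> (k <= 2 ^ n)%nat -> a <= dyadic_point a b n k <= b.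
Proof.
  intros Hab Hk. unfold dyadic_point. assert (Hp := pow2_pos n).
  assert (H0 : 0 <= INR k) by apply pos_INR.
  assert (H1 : INR k <= 2 ^ n) by (rewrite <- (pow_INR 2); simpl (INR 2) in *;
    replace 2 with (INR 2) by (simpl; lra); apply le_INR; auto).
  assert (0 <= INR k / 2 ^ n <= 1).
  { split. apply Rmult_le_pos; [lra| left; apply Rinv_0_lt_compat; lra].
    apply (Rmult_le_reg_r (2^n)); auto. unfold Rdiv.
    rewrite Rmult_assoc, Rinv_l by lra. lra. }
  unfold Rdiv. rewrite Rmult_assoc. fold (INR k / 2 ^ n).
  split. assert (0 <= (b - a) * (INR k / 2 ^ n)) by (apply Rmult_le_pos; lra). lra.
  assert ((b - a) * (INR k / 2 ^ n) <= (b - a) * 1) by (apply Rmult_le_compat_l; lra). lra.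
Qed.

Lemma generic (alpha beta : R) (u : R -> R) s : (s = 1 \/ s = -1) ->
  alpha < beta ->
  continuous_on_interval u alpha beta ->
  admissible u alpha beta ->
  s * u alpha >= 0 -> s * u beta >= 0 -> forall x, alpha <= x <= beta -> s * u x >= 0.
Proof.
  intros Hs Hab Hc Had Ha Hb x Hx.
  apply Rnot_lt_ge. intro Hneg.
  assert (Hux : u x <> 0) by (intro E; rewrite E in Hneg; lra).
  destruct (Hc x Hx (Rabs (u x))) as [d [Hd Hdd]]. apply Rabs_pos_lt; auto.
  destruct (dyadic_near alpha beta x d Hab Hx Hd) as [n [k [Hk Hnear]]].
  specialize (Hdd _ (dp_in alpha beta n k Hab Hk) Hnear).
  assert (Hy := all_dyadic u alpha beta s Hs Had Ha Hb n k Hk).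
  set (y := dyadic_point alpha beta n k) in *.
  destruct Hs; subst s.
  - rewrite (Rabs_left (u x)) in Hdd by lra.
    apply Rabs_def2 in Hdd. lra.
  - rewrite (Rabs_right (u x)) in Hdd by lra.
    apply Rabs_def2 in Hdd. lra.
Qed.

Theorem lemma2p3 (alpha beta : R) (u : R -> R) :
  alpha < beta ->
  continuous_on_interval u alpha beta ->
  admissible u alpha beta ->
  (u alpha >= 0 -> u beta >= 0 -> forall x, alpha <= x <= beta -> u x >= 0) /\
  (u alpha <= 0 -> u beta <= 0 -> forall x, alpha <= x <= beta -> u x <= 0).
Proof.
  intros Hab Hc Had. split.
  - intros Ha Hb x Hx. assert (H := generic alpha beta u 1 ltac:(auto) Hab Hc Had
      ltac:(lra) ltac:(lra) x Hx). lra.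
  - intros Ha Hb x Hx. assert (H := generic alpha beta u (-1) ltac:(auto) Hab Hc Had
      ltac:(lra) ltac:(lra) x Hx). lra.
Qed.
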